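(* Let $n\ge 1$. Every optimal $n$-town $S$ is convex, i.e., every point of $\mathbb{Z}\times\mathbb{Z}$ lying in the convex hull of $S$ belongs to $S$.
   Context: An $n$-town is a set $S\subset\mathbb{Z}\times\mathbb{Z}$ of exactly $n$ distinct grid points. Its cost is $c(S)=\frac12\sum_{s\in S}\sum_{t\in S}\|s-t\|_1$ (sum of Manhattan distances over all unordered pairs). An $n$-town is optimal if its cost is minimum among all $n$-towns. *)

(* Defs.v *)
From HB Require Import structures.
From mathcomp Require Import all_boot all_order all_algebra.
From mathcomp Require Import finmap.
From mathcomp Require Import reals.
Set Implicit Arguments. Unset Strict Implicit. Unset Printing Implicit Defensive.
Import Order.TTheory GRing.Theory Num.Theory.
Local Open Scope fset_scope.

Definition point := (int * int)%type.

Definition l1dist (s t : point) : nat :=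
  (`|s.1 - t.1|%N + `|s.2 - t.2|%N)%N.

Definition is_town (n : nat) (S : {fset point}) : Prop := #|` S| = n.

(* cost = 1/2 * sum over ordered pairs (s,t) of ||s - t||_1
   (the double sum is even, so %/ 2 is exact) *)
Definition cost (S : {fset point}) : nat :=
  ((\sum_(s <- S) \sum_(t <- S) l1dist s t) %/ 2)%N.

Definition optimal_town (n : nat) (S : {fset point}) : Prop :=
  is_town n S /\ forall T : {fset point}, is_town n T -> (cost S <= cost T)%N.

Definition in_conv_hull (R : realType) (S : {fset point}) (p : point) : Prop :=
  exists w : point -> R,
    [/\ (forall s, s \in S -> 0 <= w s)%R,
        (\sum_(s <- S) w s = 1)%R,
        (\sum_(s <- S) w s * (s.1)%:~R = (p.1)%:~R)%R
      & (\sum_(s <- S) w s * (s.2)%:~R = (p.2)%:~R)%R].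

Definition town_convex (R : realType) (S : {fset point}) : Prop :=
  forall p : point, in_conv_hull R S p -> p \in S.

(* Main.v *)
Require Import Defs.
From HB Require Import structures.
From mathcomp Require Import all_boot all_order all_algebra.
From mathcomp Require Import finmap.
From mathcomp Require Import reals.
From mathcomp Require Import zify.
Set Implicit Arguments. Unset Strict Implicit. Unset Printing Implicit Defensive.
Import Order.TTheory GRing.Theory Num.Theory.
Local Open Scope fset_scope.
Definition hsum (A : {fset point}) (q : point) : nat := (\sum_(t <- A) l1dist q t)%N.
Definition Dsum (A : {fset point}) : nat := (\sum_(s <- A) \sum_(t <- A) l1dist s t)%N.

Lemma l1dist_sym x y : l1dist x y = l1dist y x.
Proof. by rewrite /l1dist distnC [X in (_ + X)%N]distnC. Qed.

Lemma l1dist_xx x : l1dist x x = 0%N.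
Proof. by rewrite /l1dist !subrr. Qed.

Lemma l1dist_pos x y : x != y -> (0 < l1dist x y)%N.
Proof.
case: x y => [a b] [c d] /= ne; rewrite /l1dist /= addn_gt0 !absz_gt0 !subr_eq0.
by apply: contraNT ne; rewrite negb_or !negbK => /andP[/eqP-> /eqP->].
Qed.

Lemma sumU1 (x : point) (A : {fset point}) (F : point -> nat) :
  x \notin A -> (\sum_(t <- x |` A) F t = F x + \sum_(t <- A) F t)%N.
Proof. by move=> nx; rewrite big_fsetU1. Qed.

Lemma hsumU1 (x : point) (A : {fset point}) q : x \notin A -> hsum (x |` A) q = (l1dist q x + hsum A q)%N.
Proof. by move=> nx; rewrite /hsum sumU1. Qed.

Lemma DsumU1 (x : point) (A : {fset point}) : x \notin A -> Dsum (x |` A) = (Dsum A + 2 * hsum A x)%N.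
Proof.
move=> nx; rewrite /Dsum sumU1 // sumU1 // l1dist_xx add0n.
rewrite [X in (_ + X)%N](eq_bigr (fun s => l1dist s x + \sum_(t <- A) l1dist s t)%N); last by move=> s _; rewrite sumU1.
rewrite [X in (_ + X)%N]big_split /= -/(hsum A x).
have -> : (\sum_(i <- A) l1dist i x)%N = hsum A x.
  by rewrite /hsum; apply: eq_bigr => i _; rewrite l1dist_sym.
by rewrite -/(Dsum A) addnA addnC mul2n -addnn.
Qed.

Lemma seq_argmax (T : eqType) (f : T -> nat) (s : seq T) :
  s != [::] -> exists2 x, x \in s & forall y, y \in s -> (f y <= f x)%N.
Proof.
elim: s => [//|a s IH] _.
case: (eqVneq s [::]) => [->|ne].
  by exists a => [|y]; rewrite ?mem_seq1 ?inE // => /eqP->.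
have [x xs Hx] := IH ne.
case: (leqP (f x) (f a)) => H.
  exists a; first by rewrite inE eqxx.
  by move=> y; rewrite inE => /orP[/eqP->//|/Hx]; move/leq_trans; apply.
exists x; first by rewrite inE xs orbT.
by move=> y; rewrite inE => /orP[/eqP->|/Hx//]; exact: ltnW.
Qed.

Local Open Scope ring_scope.
Lemma coord_bound (R : realType) (S : {fset point}) (w : point -> R) (f : point -> int) p t :
  (forall s, s \in S -> 0 <= w s) -> \sum_(s <- S) w s = 1 ->
  \sum_(s <- S) w s * (f s)%:~R = (f p)%:~R ->
  ((`|f p - f t|%N)%:R : R) <= \sum_(s <- S) w s * (`|f s - f t|%N)%:R.
Proof.
move=> w0 w1 wf.
have E : ((f p - f t)%:~R : R) = \sum_(s <- S) w s * (f s - f t)%:~R.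
  under eq_bigr => s _ do rewrite intrB mulrBr.
  rewrite sumrB wf -mulr_suml w1 mul1r intrB //.
rewrite natr_absz intr_norm E.
apply: le_trans (ler_norm_sum _ _ _) _.
rewrite big_seq [X in _ <= X]big_seq; apply: ler_sum => s sS.
by rewrite normrM ger0_norm ?w0 // natr_absz intr_norm.
Qed.



Lemma hsumR (R : realType) (A : {fset point}) q :
  ((hsum A q)%:R : R) = \sum_(t <- A) ((`|q.1 - t.1|%N)%:R + (`|q.2 - t.2|%N)%:R).
Proof. by rewrite /hsum natr_sum; apply: eq_bigr => t _; rewrite /l1dist natrD. Qed.

Lemma hull_real (R : realType) (S : {fset point}) p (w : point -> R) :
  (forall s, s \in S -> 0 <= w s) -> \sum_(s <- S) w s = 1 ->
  \sum_(s <- S) w s * (s.1)%:~R = (p.1)%:~R ->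
  \sum_(s <- S) w s * (s.2)%:~R = (p.2)%:~R ->
  ((hsum S p)%:R : R) <= \sum_(s <- S) w s * (hsum S s)%:R.
Proof.
move=> w0 w1 e1 e2.
have -> : \sum_(s <- S) w s * ((hsum S s)%:R : R) =
   \sum_(t <- S) \sum_(s <- S) (w s * (`|s.1 - t.1|%N)%:R + w s * (`|s.2 - t.2|%N)%:R).
  rewrite exchange_big /=; apply: eq_bigr => s _.
  by rewrite hsumR mulr_sumr; apply: eq_bigr => t _; rewrite mulrDr.
rewrite hsumR; apply: ler_sum => t _; rewrite big_split /=.
apply: lerD.
  exact: (@coord_bound R S w (fun q => q.1) p t).
exact: (@coord_bound R S w (fun q => q.2) p t).
Qed.

Lemma hull_bound (R : realType) (S : {fset point}) p :
  in_conv_hull R S p -> exists2 s0, s0 \in S & (hsum S p <= hsum S s0)%N.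
Proof.
move=> [w [w0 w1 e1 e2]].
have ne : enum_fset S != [::].
  apply/eqP => E; move: w1; rewrite [X in X = _ -> _]/= E big_nil => /eqP.
  by rewrite eq_sym oner_eq0.
have [s0 s0S Hs0] := seq_argmax (hsum S) ne.
exists s0 => //.
rewrite -(ler_nat R); apply: le_trans (hull_real w0 w1 e1 e2) _.
have -> : ((hsum S s0)%:R : R) = \sum_(s <- S) w s * (hsum S s0)%:R.
  by rewrite -mulr_suml w1 mul1r.
rewrite big_seq [X in _ <= X]big_seq; apply: ler_sum => s sS.
by apply: ler_wpM2l; [exact: w0|rewrite ler_nat; exact: Hs0].
Qed.

Theorem lemma2 (R : realType) (n : nat) (S : {fset point}) :
  (1 <= n)%N -> optimal_town n S -> town_convex R S.
Proof.
move=> n1 [Sc Hopt] p Hp.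
case: (boolP (p \in S)) => // pS; exfalso.
have [s0 s0S Hb] := hull_bound Hp.
set S' := S `\ s0.
have s0S' : s0 \notin S' by rewrite fsetD11.
have pS' : p \notin S' by rewrite in_fsetD1 (negbTE pS) andbF.
have ES : S = s0 |` S' by rewrite fsetD1K.
have ps0 : p != s0 by apply: contraNneq pS => ->.
have dpos := l1dist_pos ps0.
have DS : Dsum S = (Dsum S' + 2 * hsum S' s0)%N by rewrite {1}ES DsumU1.
have H1 : hsum S s0 = hsum S' s0 by rewrite {1}ES hsumU1 // l1dist_xx.
have H2 : hsum S p = (l1dist p s0 + hsum S' p)%N by rewrite {1}ES hsumU1.
have DT : Dsum (p |` S') = (Dsum S' + 2 * hsum S' p)%N by rewrite DsumU1.
have cT : is_town n (p |` S').
  by rewrite /is_town cardfsU1 pS' -Sc ES cardfsU1 s0S'.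
have := Hopt _ cT.
rewrite /cost -/(Dsum S) -/(Dsum (p |` S')) DS DT.
move: Hb; rewrite H1 H2 => Hb.
lia.
Qed.
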